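(* Let $p$ be a prime and let $\lambda=(\lambda_1, \lambda_2, \ldots, \lambda_s)$ be a partition of $d$ with distinct parts $\lambda_1>\lambda_2>\cdots>\lambda_s>0$. Define $$\hat{\lambda}=(\lambda_1^{p-1}, \lambda_2^{p-1}, \ldots, \lambda_s^{p-1}) \vdash (p-1)d,$$ the partition in which each $\lambda_i$ appears exactly $p-1$ times. Then $m(\hat{\lambda})=(p-1)\lambda$, where $m$ is the Mullineux map.
   Context: For a partition $\nu$ and a positive integer $c$, $c\nu$ multiplies every part by $c$. A partition is $p$-regular if no part occurs $p$ or more times. For a $p$-regular partition $\nu$ of $n$, let $D^\nu$ be the simple module over $k\Sigma_n$ ($k$ algebraically closed of characteristic $p$) that is the head of the Specht module $S^\nu$. The Mullineux map $m$ is the bijection on $p$-regular partitions of $n$ defined by $D^\nu \otimes \operatorname{sgn} \cong D^{m(\nu)}$, where $\operatorname{sgn}$ is the sign representation (equivalently, the combinatorial Mullineux bijection). *)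

(* Defs.v *)
From mathcomp Require Import all_boot.
Set Implicit Arguments. Unset Strict Implicit. Unset Printing Implicit Defensive.

(* A partition is a weakly decreasing sequence of positive integers
   (row lengths of the Young diagram, top row first). *)
Definition is_partition (s : seq nat) : bool :=
  sorted geq s && all (fun x => 0 < x) s.

Definition p_regular (p : nat) (s : seq nat) : bool :=
  all (fun x => count_mem x s < p) s.

(* Number of rim nodes in each row.  Node (i,j) is in the rim iff
   (i+1,j+1) is not in the diagram, so row i contributes
   s_i - s_{i+1} + 1 nodes (s_i nodes for the last row). *)
Fixpoint rim_counts (s : seq nat) : seq nat :=
  match s with
  | [::] => [::]
  | a :: t => (a - head 0 t + (0 < head 0 t)) :: rim_counts t
  end.

(* The p-rim is made of p-segments:
   each segment starts at the rightmost node of a row and takes the next p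
   rim nodes (going down/left along the rim), or the rest of the rim if it
   has fewer; the next segment starts at the rightmost node of the row
   below the last row visited by the previous segment.  [rem] is the
   remaining capacity of the current segment. *)
Fixpoint prim_take (p rem : nat) (cs : seq nat) : seq nat :=
  match cs with
  | [::] => [::]
  | c :: cs' =>
      let t := minn rem c in
      t :: prim_take p (if rem - t == 0 then p else rem - t) cs'
  end.

Definition prim_rows (p : nat) (s : seq nat) : seq nat :=
  prim_take p p (rim_counts s).

Definition prim_size (p : nat) (s : seq nat) : nat := sumn (prim_rows p s).

Definition prim_remove (p : nat) (s : seq nat) : seq nat :=
  [seq x <- [seq xt.1 - xt.2 | xt <- zip s (prim_rows p s)] | 0 < x].

Fixpoint msymbol_fuel (fuel p : nat) (s : seq nat) : seq (nat * nat) :=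
  match fuel with
  | 0 => [::]
  | f.+1 =>
      if s is [::] then [::]
      else (prim_size p s, size s) :: msymbol_fuel f p (prim_remove p s)
  end.

Definition mullineux_symbol (p : nat) (s : seq nat) : seq (nat * nat) :=
  msymbol_fuel (sumn s) p s.

Definition mullineux_symbol_conj (p : nat) (G : seq (nat * nat)) :=
  [seq (ar.1, ar.1 - ar.2 + ~~ (p %| ar.1)) | ar <- G].

(* [is_mullineux p nu mu] : "m(nu) = mu" for the Mullineux bijection m on
   p-regular partitions; mu is the (unique, since the symbol determines
   a p-regular partition) p-regular partition whose symbol is the
   transformed symbol of nu. *)
Definition is_mullineux (p : nat) (nu mu : seq nat) : bool :=
  [&& is_partition nu, p_regular p nu, is_partition mu, p_regular p mu &
      mullineux_symbol p mu == mullineux_symbol_conj p (mullineux_symbol p nu)].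

Definition hat (p : nat) (lam : seq nat) : seq nat :=
  flatten [seq nseq p.-1 x | x <- lam].

Definition scale_part (c : nat) (lam : seq nat) : seq nat := [seq c * x | x <- lam].

Example ex1 : is_mullineux 3 [:: 3] [:: 2; 1]. Proof. by []. Qed.
Example ex2 : is_mullineux 3 (hat 3 [:: 3; 1]) (scale_part 2 [:: 3; 1]). Proof. by []. Qed.
Example ex3 : is_mullineux 5 (hat 5 [:: 4; 2; 1]) (scale_part 4 [:: 4; 2; 1]). Proof. by []. Qed.

(* Main.v *)
Require Import Defs.
From mathcomp Require Import all_boot zify.
Set Implicit Arguments. Unset Strict Implicit. Unset Printing Implicit Defensive.

Fixpoint rcw (h : nat) (s : seq nat) : seq nat :=
  match s with
  | [::] => [::]
  | a :: t => (a - head h t + (0 < head h t)) :: rcw h t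
  end.

Fixpoint pfin (p rem : nat) (cs : seq nat) : nat :=
  match cs with
  | [::] => rem
  | c :: cs' => let t := minn rem c in pfin p (if rem - t == 0 then p else rem - t) cs'
  end.

Definition sub2 (s d : seq nat) := [seq xt.1 - xt.2 | xt <- zip s d].

Lemma rim_cat a b : rim_counts (a ++ b) = rcw (head 0 b) a ++ rim_counts b.
Proof. elim: a => [|x a IH] //=; rewrite IH; by case: a {IH}. Qed.

Lemma ptake_cat p rem a b :
  prim_take p rem (a ++ b) = prim_take p rem a ++ prim_take p (pfin p rem a) b.
Proof. by elim: a rem => [|x a IH] rem //=; rewrite IH. Qed.

Lemma size_ptake p rem s : size (prim_take p rem s) = size s.
Proof. by elim: s rem => [|x s IH] rem //=; rewrite IH. Qed.

Lemma size_rcw h s : size (rcw h s) = size s.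
Proof. by elim: s => [|x s IH] //=; rewrite IH. Qed.


Lemma ptake_ones p rem n s : n < rem ->
  prim_take p rem (nseq n 1 ++ s) = nseq n 1 ++ prim_take p (rem - n) s.
Proof.
elim: n rem => [|n IH] rem h /=; first by rewrite subn0.
have -> : minn rem 1 = 1 by lia.
have -> : (rem - 1 == 0) = false by apply/eqP; lia.
rewrite IH; last by lia.
congr (_ :: _ ++ prim_take _ _ _); lia.
Qed.

Lemma pfin_ones p rem n s : n < rem ->
  pfin p rem (nseq n 1 ++ s) = pfin p (rem - n) s.
Proof.
elim: n rem => [|n IH] rem h /=; first by rewrite subn0.
have -> : minn rem 1 = 1 by lia.
have -> : (rem - 1 == 0) = false by apply/eqP; lia.
rewrite IH; last by lia.
congr pfin; lia.
Qed.

Lemma sub2_nseq n a b s t :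
  sub2 (nseq n a ++ s) (nseq n b ++ t) = nseq n (a - b) ++ sub2 s t.
Proof. by elim: n => [|n IH] //=; rewrite -IH. Qed.

Lemma sub2_cat s1 s2 t1 t2 : size s1 = size t1 ->
  sub2 (s1 ++ s2) (t1 ++ t2) = sub2 s1 t1 ++ sub2 s2 t2.
Proof. by move=> h; rewrite /sub2 zip_cat // map_cat. Qed.

Lemma rcw_nseq h n a s : 0 < a ->
  rcw h (nseq n.+1 a ++ s) = nseq n 1 ++ (a - head h s + (0 < head h s)) :: rcw h s.
Proof.
move=> a0; elim: n => [|n IH] //.
change (nseq n.+2 a ++ s) with (a :: (nseq n.+1 a ++ s)).
rewrite (_ : rcw h (a :: (nseq n.+1 a ++ s)) = (a - a + (0<a)) :: rcw h (nseq n.+1 a ++ s)) //.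
by rewrite IH subnn a0.
Qed.

Definition blk (p1 q r : nat) := nseq r q.+1 ++ nseq (p1 - r) q.
Definition bal (p1 m : nat) := blk p1 (m %/ p1) (m %% p1).

Lemma ptake_cons p rem c cs : prim_take p rem (c :: cs) =
  minn rem c :: prim_take p (if rem - minn rem c == 0 then p else rem - minn rem c) cs.
Proof. by []. Qed.

Lemma pfin_cons p rem c cs : pfin p rem (c :: cs) =
  pfin p (if rem - minn rem c == 0 then p else rem - minn rem c) cs.
Proof. by []. Qed.

Lemma sub2_cons x y s t : sub2 (x :: s) (y :: t) = (x - y) :: sub2 s t.
Proof. by []. Qed.

Lemma bal_eq p1 q r : r < p1 -> bal p1 (q * p1 + r) = blk p1 q r.
Proof.
move=> rp; have p0 : 0 < p1 by lia.
by rewrite /bal divnMDl // divn_small // addn0 modnMDl modn_small.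
Qed.

Lemma bal0 p1 : [seq x <- bal p1 0 | 0 < x] = [::].
Proof. by rewrite /bal div0n mod0n /blk /= filter_nseq. Qed.

Lemma nseqSr n (a : nat) : nseq n.+1 a = nseq n a ++ [:: a].
Proof. by elim: n => //= n <-. Qed.

Lemma block p1 q r h : 0 < p1 -> r < p1 -> (0 < h -> h * p1 < q * p1 + r) ->
  let X := [seq x <- blk p1 q r | 0 < x] in
  let D := prim_take p1.+1 p1.+1 (rcw h X) in
  [/\ [seq x <- sub2 X D | 0 < x] = [seq x <- bal p1 (q * p1 + r - p1.+1) | 0 < x],
      sumn D = minn p1.+1 (q * p1 + r), size X = minn p1 (q * p1 + r) &
      (0 < h -> pfin p1.+1 p1.+1 (rcw h X) = p1.+1)].
Proof.
move=> p0 rp hh.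
case: q hh => [|Q] hh.
- move=> X D.
  have h0 : h = 0 by case: (posnP h) => // hp; move: (hh hp); nia.
  have eX : X = nseq r 1 by rewrite /X /blk filter_cat !filter_nseq /= mul1n cats0.
  have -> : 0 * p1 + r - p1.+1 = 0 by lia.
  rewrite bal0 /D eX h0; clear D eX X hh.
  case: r rp => [|r'] rp.
    by split => //; lia.
  rewrite -[nseq r'.+1 1]cats0 rcw_nseq // ptake_ones; last by lia.
  have -> : 1 - head 0 [::] + (0 < head 0 [::]) = 1 by [].
  rewrite ptake_cons.
  have -> : minn (p1.+1 - r') 1 = 1 by lia.
  split.
  + by rewrite cats0 nseqSr sub2_nseq /= filter_cat filter_nseq.
  + by rewrite sumn_cat sumn_nseq /=; lia.
  + by rewrite cats0 size_nseq; lia.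
  + by [].
- case: r rp hh => [|r'] rp hh.
  + case: p1 p0 rp hh => [|k] // _ _ hh X D.
    have eX : X = nseq k.+1 Q.+1 ++ [::].
      by rewrite /X /blk filter_cat !filter_nseq subn0 !mul1n cats0.
    rewrite /D eX rcw_nseq // ptake_ones; last by lia.
    rewrite pfin_ones; last by lia.
    rewrite ptake_cons pfin_cons [head h [::]]/= cats0 [prim_take _ _ [::]]/= [pfin _ _ [::]]/= nseqSr.
    have -> : k.+2 - k = 2 by lia.
    case: (boolP ((Q == 0) && (h == 0))) => [/andP [/eqP Q0 /eqP h0]|HQ].
      rewrite Q0 h0.
      have -> : minn 2 (1 - 0 + (0 < 0)) = 1 by [].
      have -> : 1 * k.+1 + 0 - k.+2 = 0 by lia.
      rewrite bal0 sub2_nseq [sub2 [:: _] _]/= filter_cat filter_nseq.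
      split => //.
      * by rewrite sumn_cat sumn_nseq /=; lia.
      * by rewrite size_cat size_nseq /=; lia.
    have hQ : h <= Q by case: (posnP h) => [->|hp] //; move: (hh hp); nia.
    have Q1 : 0 < Q.
      case: (posnP h) HQ => [h0|hp] HQ; first by move: HQ; rewrite lt0n; apply: contra => ->; rewrite andbT. 
      by move: (hh hp) hQ; nia.
    have -> : minn 2 (Q.+1 - h + (0 < h)) = 2 by case: (posnP h); lia.
    clear D eX X; case: Q Q1 hQ hh {HQ} => [|Q'] // _ hQ hh.
    have -> : Q'.+2 * k.+1 + 0 - k.+2 = Q' * k.+1 + k by nia.
    rewrite bal_eq // /blk.
    have -> : k.+1 - k = 1 by lia.
    rewrite sub2_nseq [sub2 [:: _] _]/=.
    split.
    * congr (filter _ (_ ++ _)); rewrite /sub2 /=; congr [:: _]; lia.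
    * by rewrite sumn_cat sumn_nseq /=; nia.
    * by rewrite size_cat size_nseq /=; nia.
    * by [].
  + move=> X D.
    have [j ej] : exists j, p1 - r'.+1 = j.+1 by exists (p1 - r'.+2); lia.
    have eX : X = nseq r'.+1 Q.+2 ++ nseq j.+1 Q.+1.
      by rewrite /X /blk filter_cat !filter_nseq !mul1n ej.
    rewrite /D eX rcw_nseq //.
    rewrite -[nseq j.+1 Q.+1]cats0 rcw_nseq //.
    rewrite ptake_ones; last by lia.
    rewrite pfin_ones; last by lia.
    rewrite ptake_cons pfin_cons /= !cats0.
    have -> : Q.+2 - Q.+1 + 1 = 2 by lia.
    have -> : minn (p1.+1 - r') 2 = 2 by lia.
    have -> : (p1.+1 - r' - 2 == 0) = false by apply/eqP; lia.
    have -> : p1.+1 - r' - 2 = j.+1 by lia.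
    rewrite ptake_ones; last by lia.
    rewrite pfin_ones; last by lia.
    rewrite ptake_cons pfin_cons /=.
    have -> : minn (j.+1 - j) (Q.+1 - h + (0 < h)) = 1 by case: (posnP h); lia.
    have -> : j.+1 - j - 1 = 0 by lia.
    have -> : Q.+1 * p1 + r'.+1 - p1.+1 = Q * p1 + r' by nia.
    rewrite bal_eq; last by lia.
    rewrite /blk.
    have -> : p1 - r' = j.+2 by lia.
    split.
    * congr (filter _ _).
      rewrite -[Q.+2 :: _]/(nseq r'.+1 Q.+2 ++ (Q.+1 :: nseq j Q.+1)) nseqSr -catA sub2_nseq.
      rewrite [[:: Q.+2] ++ _]/= sub2_cons -[Q.+1 :: nseq j Q.+1]/(nseq j.+1 Q.+1) nseqSr sub2_nseq.
      rewrite -[nseq j.+2 Q]/(Q :: nseq j.+1 Q) nseqSr.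
      have -> : Q.+2 - 1 = Q.+1 by lia.
      have -> : Q.+2 - 2 = Q by lia.
      have -> : Q.+1 - 1 = Q by lia.
      by rewrite /sub2 /= subn1.
    * rewrite sumn_cat sumn_nseq /= sumn_cat sumn_nseq /=; nia.
    * rewrite /= size_cat /= !size_nseq; nia.
    * by [].
Qed.

Definition NN (p1 : nat) (mu : seq nat) :=
  [seq x <- flatten [seq bal p1 m | m <- mu] | 0 < x].

Definition Rf (p1 : nat) : rel nat := fun x y => y + p1 <= x.

Definition fam (p1 : nat) (mu : seq nat) :=
  sorted (Rf p1) mu && all (fun x => 0 < x) mu.

Lemma NN_cons p1 m t : NN p1 (m :: t) = [seq x <- bal p1 m | 0 < x] ++ NN p1 t.
Proof. by rewrite /NN /= filter_cat. Qed.

Lemma NN_pos p1 mu : all (fun x => 0 < x) (NN p1 mu).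
Proof. exact: filter_all. Qed.

Lemma head_bal p1 m : 0 < p1 -> 0 < m ->
  [seq x <- bal p1 m | 0 < x] != [::] /\ head 0 [seq x <- bal p1 m | 0 < x] * p1 < m + p1.
Proof.
move=> p0 m0.
have rp := ltn_pmod m p0.
have em := divn_eq m p1.
rewrite /bal /blk filter_cat !filter_nseq.
case: (posnP (m %% p1)) => [r0|rpos].
- rewrite r0 subn0 /=.
  have q0 : 0 < m %/ p1 by move: em; rewrite r0; case: (m %/ p1) => //= ; lia.
  rewrite q0 mul1n.
  case: p1 p0 {rp em r0 q0} (q0) => // k _ q0 /=.
  split => //. move: (divn_eq m k.+1) (ltn_pmod m (ltn0Sn k)). lia.
- case: (m %% p1) rpos em rp => // r' _ em rp /=.
  split => //. nia.
Qed.

Lemma prim_rows_cat p a b : all (fun x => 0 < x) b ->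
  (0 < head 0 b -> pfin p p (rcw (head 0 b) a) = p) ->
  prim_rows p (a ++ b) = prim_take p p (rcw (head 0 b) a) ++ prim_rows p b.
Proof.
move=> pb hp; rewrite /prim_rows rim_cat ptake_cat.
case: b pb hp => [|y b] //= /andP [y0 _] hp.
by rewrite hp.
Qed.

Lemma NN_main p1 mu : 0 < p1 -> fam p1 mu ->
  [/\ [seq x <- sub2 (NN p1 mu) (prim_rows p1.+1 (NN p1 mu)) | 0 < x]
        = NN p1 [seq m - p1.+1 | m <- mu],
      sumn (prim_rows p1.+1 (NN p1 mu)) = sumn [seq minn p1.+1 m | m <- mu] &
      size (NN p1 mu) = sumn [seq minn p1 m | m <- mu]].
Proof.
move=> p0; elim: mu => [|m t IH] //= /andP [hs /andP [m0 ht]].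
have ft : fam p1 t by apply/andP; split; [exact: path_sorted hs | exact: ht].
case: (IH ft) => [E1 E2 E3] {IH}.
have hh : 0 < head 0 (NN p1 t) -> head 0 (NN p1 t) * p1 < m.
  case: t hs ht {E1 E2 E3 ft} => [|m' t] //= /andP [Rm _] /andP [m'0 _] _.
  rewrite NN_cons; have [ne hb] := head_bal p0 m'0.
  case: [seq x <- bal p1 m' | 0 < x] ne hb => //= y l _ hb.
  rewrite /Rf in Rm; lia.
have rp := ltn_pmod m p0.
have em := divn_eq m p1.
have [B1 B2 B3 B4] := block (q := m %/ p1) p0 rp (eq_ind _ (fun z => 0 < _ -> _ < z) hh _ em).
rewrite -em in B1 B2 B3.
rewrite NN_cons prim_rows_cat ?NN_pos //.
rewrite sub2_cat; last by rewrite size_ptake size_rcw.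
rewrite filter_cat B1 E1 NN_cons sumn_cat B2 E2 size_cat B3 E3.
by split.
Qed.

Lemma prim_rows_fam p1 mu : 0 < p1 -> fam p1 mu ->
  prim_rows p1.+1 mu = [seq minn p1.+1 m | m <- mu].
Proof.
move=> p0; rewrite /prim_rows.
elim: mu => [|m t IH] // /andP [hs /andP [m0 ht]].
have ft : fam p1 t by apply/andP; split; [exact: path_sorted hs | exact: ht].
case: t hs ht ft IH => [|m' t] hs ht ft IH.
  by rewrite /= subn0 addn0.
rewrite map_cons -(IH ft).
rewrite (_ : rim_counts [:: m, m' & t] = (m - m' + (0 < m')) :: rim_counts (m' :: t)) // ptake_cons.
move: hs => /= /andP [Rm _]; move: ht => /= /andP [m'0 _].
rewrite /Rf in Rm.
have -> : minn p1.+1 (m - m' + (0 < m')) = p1.+1 by rewrite m'0; lia.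
have -> : minn p1.+1 m = p1.+1 by lia.
by rewrite subnn eqxx.
Qed.

Lemma sub2_map s f : sub2 s [seq f x | x <- s] = [seq x - f x | x <- s].
Proof. by elim: s => //= x s <-. Qed.

Lemma prim_remove_fam p1 mu : 0 < p1 -> fam p1 mu ->
  prim_remove p1.+1 mu = [seq x <- [seq m - p1.+1 | m <- mu] | 0 < x].
Proof.
move=> p0 fm; rewrite /prim_remove prim_rows_fam // -/(sub2 _ _) sub2_map.
congr filter; apply: eq_map => x; lia.
Qed.

Lemma Rf_trans p1 : transitive (Rf p1).
Proof. move=> y x z; rewrite /Rf; lia. Qed.

Lemma fam_remove p1 mu : 0 < p1 -> fam p1 mu -> fam p1 (prim_remove p1.+1 mu).
Proof.
move=> p0 fm; rewrite prim_remove_fam // filter_map.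
case/andP: fm => hs hp.
apply/andP; split.
  rewrite sorted_map.
  apply: (@sub_in_sorted _ (preim (fun m => m - p1.+1) (fun x => 0 < x)) (Rf p1)).
  - move=> x y hx hy; move: hx hy; rewrite /in_mem /= /Rf /=; lia.
  - exact: filter_all.
  - exact: (sorted_filter (@Rf_trans p1) _ hs).
rewrite all_map; exact: filter_all.
Qed.

Lemma NN_filter p1 s : NN p1 [seq x <- s | 0 < x] = NN p1 s.
Proof.
elim: s => [|x s IH] //=.
case: x => [|x]; last by rewrite !NN_cons IH.
by rewrite IH NN_cons bal0.
Qed.

Lemma sumn_filter_pos s : sumn [seq x <- s | 0 < x] = sumn s.
Proof. by elim: s => [|[|x] s IH] //=; rewrite IH. Qed.

Lemma sumn_bal p1 m : 0 < p1 -> sumn (bal p1 m) = m.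
Proof.
move=> p0; rewrite /bal /blk sumn_cat !sumn_nseq.
have := divn_eq m p1; have := ltn_pmod m p0; nia.
Qed.

Lemma sumn_NN p1 mu : 0 < p1 -> sumn (NN p1 mu) = sumn mu.
Proof.
move=> p0; elim: mu => [|m t IH] //.
by rewrite NN_cons sumn_cat sumn_filter_pos sumn_bal // IH.
Qed.

Lemma sum_minn_le p1 t :
  sumn [seq minn p1 m | m <- t] <= sumn [seq minn p1.+1 m | m <- t].
Proof. elim: t => //= m t IH; lia. Qed.

Lemma col p1 m t : 0 < p1 -> fam p1 (m :: t) ->
  sumn [seq minn p1.+1 x | x <- m :: t] - sumn [seq minn p1 x | x <- m :: t]
  + ~~ (p1.+1 %| sumn [seq minn p1.+1 x | x <- m :: t]) = (size t).+1.
Proof.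
move=> p0; elim: t m => [|m' t IH] m /andP [hs /andP [m0 ht]].
  rewrite /= !addn0.
  case: (leqP p1.+1 m) => hm.
    have -> : minn p1 m = p1 by lia.
    by rewrite dvdnn subSn // subnn.
  have -> : minn p1 m = m by lia.
  rewrite subnn.
  case: (boolP (p1.+1 %| m)) => // /(dvdn_leq m0); lia.
have ft : fam p1 (m' :: t) by apply/andP; split; [exact: path_sorted hs | exact: ht].
move: (IH m' ft) => {IH}.
move: hs => /= /andP [Rm _]; rewrite /Rf in Rm.
have -> : minn p1.+1 m = p1.+1 by lia.
have -> : minn p1 m = p1 by lia.
rewrite (dvdn_addr _ (dvdnn p1.+1)).
have := sum_minn_le p1 (m' :: t).
rewrite [size _]/= /=.
move=> le IH; lia.
Qed.

Lemma sym p1 f mu : 0 < p1 -> fam p1 mu ->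
  msymbol_fuel f p1.+1 mu = mullineux_symbol_conj p1.+1 (msymbol_fuel f p1.+1 (NN p1 mu)).
Proof.
move=> p0; elim: f mu => [|f IH] mu fm //.
case: mu fm => [|m t] fm; first by [].
have m0 : 0 < m by case/andP: fm => _ /andP [].
have [ne _] := head_bal p0 m0.
have [E1 E2 E3] := NN_main p0 fm.
have E : NN p1 (m :: t) != [::] by rewrite NN_cons; case: [seq x <- bal p1 m | 0 < x] ne.
have -> : msymbol_fuel f.+1 p1.+1 (NN p1 (m :: t)) = (prim_size p1.+1 (NN p1 (m::t)), size (NN p1 (m::t))) :: msymbol_fuel f p1.+1 (prim_remove p1.+1 (NN p1 (m::t))) by case: (NN p1 (m::t)) E.
have -> : prim_remove p1.+1 (NN p1 (m::t)) = NN p1 (prim_remove p1.+1 (m::t)) by rewrite (prim_remove_fam p0 fm) NN_filter -E1.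
have -> : msymbol_fuel f.+1 p1.+1 (m :: t) = (prim_size p1.+1 (m::t), size (m::t)) :: msymbol_fuel f p1.+1 (prim_remove p1.+1 (m::t)) by [].
rewrite /mullineux_symbol_conj map_cons -/(mullineux_symbol_conj _ _) -IH; last exact: fam_remove.
have e1 : prim_size p1.+1 (NN p1 (m :: t)) = prim_size p1.+1 (m :: t) by rewrite /prim_size E2 prim_rows_fam.
rewrite [(_, _).1]/= [(_, _).2]/= e1 E3.
by rewrite /prim_size prim_rows_fam // (col p0 fm).
Qed.

Lemma hat_cons p x t : hat p (x :: t) = nseq p.-1 x ++ hat p t.
Proof. by []. Qed.

Lemma hat_NN p1 lam : 0 < p1 -> all (fun x => 0 < x) lam ->
  hat p1.+1 lam = NN p1 (scale_part p1 lam).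
Proof.
move=> p0; elim: lam => [|x t IH] // /andP [x0 ht].
rewrite hat_cons /scale_part map_cons -/(scale_part p1 t) NN_cons -IH //.
rewrite (_ : p1 * x = x * p1 + 0); last by rewrite mulnC addn0.
by rewrite bal_eq // /blk subn0 filter_cat !filter_nseq x0 !mul1n.
Qed.

Lemma fam_scale p1 lam : 0 < p1 -> sorted gtn lam -> all (fun x => 0 < x) lam ->
  fam p1 (scale_part p1 lam).
Proof.
move=> p0 hs hp; apply/andP; split.
  rewrite sorted_map; apply: sub_sorted hs => x y /=; rewrite /Rf; nia.
rewrite all_map; apply: sub_all hp => x /=; nia.
Qed.

Lemma path_nseq x k s : path geq x (nseq k x ++ s) = path geq x s.
Proof. by elim: k => //= k ->; rewrite leqnn. Qed.

Lemma hat_sorted k lam : sorted gtn lam -> sorted geq (hat k.+2 lam).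
Proof.
elim: lam => [|x t IH] // hs.
rewrite hat_cons /= path_nseq.
case: t hs IH => [|y t] // /= /andP [yx hs] IH.
rewrite (IH hs) andbT; exact: ltnW.
Qed.

Lemma gtn_trans : transitive gtn.
Proof. move=> y x z /= h1 h2; lia. Qed.

Lemma count_hat p lam y : count_mem y (hat p lam) = p.-1 * count_mem y lam.
Proof.
elim: lam => [|x t IH] //=; first by rewrite muln0.
by rewrite hat_cons count_cat count_nseq IH mulnDr mulnC.
Qed.

Theorem proposition7p3 (p : nat) (lam : seq nat) :
  prime p -> sorted gtn lam -> all (fun x => 0 < x) lam ->
  is_mullineux p (hat p lam) (scale_part p.-1 lam).
Proof.
move=> pp hs hp.
have p1gt := prime_gt1 pp.
case: p pp p1gt => [|p1] // pp p1gt.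
have p0 : 0 < p1 by lia.
rewrite [p1.+1.-1]/=.
have fm := fam_scale p0 hs hp.
have hu : uniq lam := sorted_uniq gtn_trans (fun x => ltnn x) hs.
apply/and5P; split.
- apply/andP; split.
    case: p1 p0 {pp p1gt fm} => // k _; exact: hat_sorted.
  rewrite hat_NN //; exact: NN_pos.
- apply/allP => y _; rewrite count_hat /= count_uniq_mem //.
  case: (y \in lam); lia.
- apply/andP; split; last by case/andP: fm.
  rewrite /scale_part sorted_map; apply: sub_sorted hs => x y /=; nia.
- have inj : injective (muln p1).
    by move=> a b /eqP; rewrite eqn_pmul2l // => /eqP.
  apply/allP => y _; rewrite count_uniq_mem; last by rewrite map_inj_uniq.
  case: (y \in _); lia.
- rewrite hat_NN // /mullineux_symbol sumn_NN // sym //.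
Qed.
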